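(* Consider the Parallel Symmetric Subspace Decomposition (P-SSD) algorithm described in the context, executed by $M$ agents over an arbitrary, possibly time-varying, sequence of communication digraphs $\{G_k=(\{1,\dots,M\},E_k)\}_{k\ge 1}$. Then the algorithm reaches an equilibrium after a finite number of iterations, i.e., there exists $k\in\mathbb{N}$ such that $C_p^i=C_k^i$ for all $p>k$ and all $i\in\{1,\dots,M\}$.
   Context: Data setting: a map $T:\mathcal{M}\to\mathcal{M}$, $\mathcal{M}\subseteq\mathbb{R}^n$; a dictionary $D(x)=[d_1(x),\dots,d_{N_d}(x)]$ of real-valued functions on $\mathcal{M}$; data matrices $X,Y\in\mathbb{R}^{N\times n}$ whose $i$-th rows $x_i^T,y_i^T$ satisfy $y_i=T(x_i)$; $D(X)\in\mathbb{R}^{N\times N_d}$ is the matrix with rows $D(x_1),\dots,D(x_N)$ (similarly $D(Y)$). Assumption: $D(X)$ and $D(Y)$ have full column rank. There are $M$ agents; agent $i$ holds local dictionary snapshots $D(X_i),D(Y_i)$ (obtained from a subset of the snapshot pairs) such that the union over $i$ of the rows of $[D(X_i),D(Y_i)]$ equals the set of rows of $[D(X),D(Y)]$. There are signature matrices $D(X_s),D(Y_s)$ with full column rank such that the rows of $[D(X_s),D(Y_s)]$ are contained in the rows of $[D(X_i),D(Y_i)]$ for every $i$. SSD algorithm: given $A,B\in\mathbb{R}^{m\times q}$, set $A_1=A$, $B_1=B$, $C=I_q$, and iterate: let $[Z^A_j;Z^B_j]$ be a matrix whose columns form a basis of the null space of $[A_j,B_j]$ (with $Z^A_j$ having as many rows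 as $A_j$ has columns); if the null space is trivial return $0$; if the number of rows of $Z^A_j$ is at most its number of columns, return $C$; otherwise set $C\leftarrow CZ^A_j$, $A_{j+1}=A_jZ^A_j$, $B_{j+1}=B_jZ^A_j$. Its output is denoted $\mathrm{SSD}(A,B)$. P-SSD algorithm: at iteration $k\ge1$ the digraph $G_k$ is used; an edge $(j,i)\in E_k$ means $j$ is an in-neighbor of $i$, and $\mathcal{N}_{\mathrm{in}}^k(i)$ denotes the in-neighbors of $i$ in $G_k$. Each agent $i$ sets $C_0^i=I_{N_d}$, $\mathrm{flag}_0^i=0$, and for $k=1,2,\dots$: receives $C_{k-1}^j$ for $j\in\mathcal{N}_{\mathrm{in}}^k(i)$; sets $D_k^i=\mathrm{basis}\big(\bigcap_{j\in\{i\}\cup\mathcal{N}_{\mathrm{in}}^k(i)}\mathcal{R}(C_{k-1}^j)\big)$; sets $E_k^i=\mathrm{SSD}(D(X_i)D_k^i,D(Y_i)D_k^i)$; if the number of columns of $D_k^iE_k^i$ is strictly less than that of $C_{k-1}^i$, sets $C_k^i=D_k^iE_k^i$ and $\mathrm{flag}_k^i=0$; otherwise sets $C_k^i=C_{k-1}^i$ and $\mathrm{flag}_k^i=1$; then transmits $C_k^i$ to its out-neighbors. Here $\mathrm{basis}(\mathcal{A})$ returns a matrix whose columns form a basis of the subspace $\mathcal{A}$, and returns $0$ if $\mathcal{A}=\{0\}$; the matrix $0$ is regarded as having $0$ columns. $\mathcal{R}(\cdot)$ denotes range space. *)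

(* Defs.v *)
From HB Require Import structures.
From mathcomp Require Import all_boot all_order all_algebra.
From mathcomp Require Import reals.
Set Implicit Arguments. Unset Strict Implicit. Unset Printing Implicit Defensive.
Import Order.TTheory GRing.Theory Num.Theory.
Local Open Scope ring_scope.

(* A matrix with a variable number of columns (the "0 matrix" of the paper,
   which is regarded as having 0 columns, is a matrix with 0 columns). *)
Definition vmx (R : fieldType) (r : nat) := {c : nat & 'M[R]_(r, c)}.
Definition ncols (R : fieldType) (r : nat) (A : vmx R r) : nat := projT1 A.
Definition vmat (R : fieldType) (r : nat) (A : vmx R r) : 'M[R]_(r, ncols A) :=
  projT2 A.
Definition mkvmx (R : fieldType) (r c : nat) (A : 'M[R]_(r, c)) : vmx R r :=
  existT (fun c => 'M[R]_(r, c)) c A.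

(* For p = 0 this holds iff the subspace is {0}, matching basis(.)=0. *)
Definition colbasis (R : fieldType) (k p : nat) (P : 'cV[R]_k -> Prop)
  (B : 'M[R]_(k, p)) : Prop :=
  [/\ (forall j : 'I_p, P (col j B)),
      (forall v, P v -> exists w : 'cV[R]_p, v = B *m w) &
      (forall w : 'cV[R]_p, B *m w = 0 -> w = 0)].

Definition nullsp (R : fieldType) (m k : nat) (A : 'M[R]_(m, k)) (v : 'cV[R]_k)
  : Prop := A *m v = 0.
Definition inrange (R : fieldType) (k c : nat) (A : 'M[R]_(k, c)) (v : 'cV[R]_k)
  : Prop := exists w : 'cV[R]_c, v = A *m w.

(* The SSD algorithm, as a relation (the choice of null-space basis at each
   step is arbitrary). [ssd_run A B C out]: started from current data
   A_j = A, B_j = B, C = C, the algorithm returns [out]. *)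
Inductive ssd_run (R : fieldType) (m q : nat) :
  forall qj : nat, 'M[R]_(m, qj) -> 'M[R]_(m, qj) -> 'M[R]_(q, qj) -> vmx R q -> Prop :=
| ssd_trivial qj (A B : 'M[R]_(m, qj)) (C : 'M[R]_(q, qj)) p
    (Z : 'M[R]_(qj + qj, p)) :
    colbasis (nullsp (row_mx A B)) Z ->
    (forall z, nullsp (row_mx A B) z -> z = 0) ->
    ssd_run A B C (mkvmx (0 : 'M[R]_(q, 0)))
| ssd_stop qj (A B : 'M[R]_(m, qj)) (C : 'M[R]_(q, qj)) p
    (Z : 'M[R]_(qj + qj, p)) :
    colbasis (nullsp (row_mx A B)) Z ->
    ~ (forall z, nullsp (row_mx A B) z -> z = 0) ->
    (qj <= p)%N ->
    ssd_run A B C (mkvmx C)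
| ssd_step qj (A B : 'M[R]_(m, qj)) (C : 'M[R]_(q, qj)) p
    (Z : 'M[R]_(qj + qj, p)) out :
    colbasis (nullsp (row_mx A B)) Z ->
    ~ (forall z, nullsp (row_mx A B) z -> z = 0) ->
    (p < qj)%N ->
    ssd_run (A *m usubmx Z) (B *m usubmx Z) (C *m usubmx Z) out ->
    ssd_run A B C out.

Definition SSD (R : fieldType) (m q : nat) (A B : 'M[R]_(m, q)) (E : vmx R q)
  : Prop := ssd_run A B (1%:M : 'M[R]_q) E.

Definition Dmat (R : fieldType) (n Nd N : nat) (d : 'I_Nd -> 'rV[R]_n -> R)
  (X : 'M[R]_(N, n)) : 'M[R]_(N, Nd) :=
  \matrix_(i < N, j < Nd) d j (row i X).

(* One P-SSD iteration k >= 1 for agent i.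
   Cprev = (C_{k-1}^j)_j, Ek k j i = (j,i) is an edge of G_k,
   DXi, DYi: local dictionary snapshots of agent i; Cnew = C_k^i. *)
Definition pssd_step (R : fieldType) (Mag Nd Ni : nat)
  (Ek : 'I_Mag -> 'I_Mag -> bool) (i : 'I_Mag)
  (DXi DYi : 'M[R]_(Ni, Nd)) (Cprev : 'I_Mag -> vmx R Nd) (Cnew : vmx R Nd)
  : Prop :=
  exists (Dk : vmx R Nd) (Ek_ : vmx R (ncols Dk)),
    [/\ colbasis (fun v => forall j : 'I_Mag, (j == i) || Ek j i ->
                              inrange (vmat (Cprev j)) v) (vmat Dk),
        SSD (DXi *m vmat Dk) (DYi *m vmat Dk) Ek_ &
        (if (ncols Ek_ < ncols (Cprev i))%N
         then Cnew = mkvmx (vmat Dk *m vmat Ek_)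
         else Cnew = Cprev i)].

Definition pssd_execution (R : fieldType) (Mag Nd : nat)
  (Ni : 'I_Mag -> nat) (DXi DYi : forall i : 'I_Mag, 'M[R]_(Ni i, Nd))
  (E : nat -> 'I_Mag -> 'I_Mag -> bool) (C : nat -> 'I_Mag -> vmx R Nd) : Prop :=
  (forall i, C 0%N i = mkvmx (1%:M : 'M[R]_Nd)) /\
  (forall (k : nat) (i : 'I_Mag),
     pssd_step (E k.+1) i (DXi i) (DYi i) (C k) (C k.+1 i)).

(* Main.v *)
Require Import Defs.
From HB Require Import structures.
From mathcomp Require Import all_boot all_order all_algebra.
From mathcomp Require Import reals.
From Stdlib Require Import Classical.
From mathcomp Require Import zify.
Import Order.TTheory GRing.Theory Num.Theory.
Local Open Scope ring_scope.

Lemma nonincr_stab (n : nat) : forall f : nat -> nat, (forall k, f k.+1 <= f k)%N ->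
  (f 0 <= n)%N -> exists k, forall p, (k <= p)%N -> f p = f k.
Proof.
elim: n => [|n IH] f mon.
- move=> h0; exists 0%N => p _.
  have: forall p, (f p <= f 0)%N.
    by elim=> [|q IHq] //; apply: leq_trans (mon q) IHq.
  by move=> /(_ p); move: h0; lia.
- move=> h0.
  have fle: forall p, (f p <= f 0)%N.
    by elim=> [|q IHq] //; apply: leq_trans (mon q) IHq.
  case: (classic (exists k, (f k < f 0)%N)) => [[k hk]|hno].
  + have mon' : forall j, (f (k + j.+1) <= f (k + j))%N.
      by move=> j; rewrite addnS; apply: mon.
    have h0' : (f (k + 0) <= n)%N by rewrite addn0; lia.
    have [k' hk'] := IH (fun j => f (k + j)%N) mon' h0'.
    exists (k + k')%N => p hp.
    have := hk' (p - k)%N ltac:(lia).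
    by have -> : (k + (p - k))%N = p by lia.
  + exists 0%N => p _.
    have := fle p; have : ~ (f p < f 0)%N by move=> h; apply: hno; exists p.
    lia.
Qed.

Theorem proposition4p2
  (R : realType) (n N Nd Mag : nat)
  (Mset : 'rV[R]_n -> Prop) (T : 'rV[R]_n -> 'rV[R]_n)
  (hT : forall x, Mset x -> Mset (T x))
  (d : 'I_Nd -> 'rV[R]_n -> R)
  (X Y : 'M[R]_(N, n))
  (hXM : forall r : 'I_N, Mset (row r X))
  (hXY : forall r : 'I_N, row r Y = T (row r X))
  (hDX : \rank (Dmat d X) = Nd) (hDY : \rank (Dmat d Y) = Nd)
  (Ni : 'I_Mag -> nat) (Xi Yi : forall i : 'I_Mag, 'M[R]_(Ni i, n))
  (hloc : forall (i : 'I_Mag) (r : 'I_(Ni i)), exists r' : 'I_N,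
      row r (Xi i) = row r' X /\ row r (Yi i) = row r' Y)
  (hunion1 : forall (i : 'I_Mag) (r : 'I_(Ni i)), exists r' : 'I_N,
      row r (row_mx (Dmat d (Xi i)) (Dmat d (Yi i)))
      = row r' (row_mx (Dmat d X) (Dmat d Y)))
  (hunion2 : forall r' : 'I_N, exists (i : 'I_Mag) (r : 'I_(Ni i)),
      row r (row_mx (Dmat d (Xi i)) (Dmat d (Yi i)))
      = row r' (row_mx (Dmat d X) (Dmat d Y)))
  (Ns : nat) (Xs Ys : 'M[R]_(Ns, n))
  (hDXs : \rank (Dmat d Xs) = Nd) (hDYs : \rank (Dmat d Ys) = Nd)
  (hsig : forall (i : 'I_Mag) (r : 'I_Ns), exists r' : 'I_(Ni i),
      row r (row_mx (Dmat d Xs) (Dmat d Ys))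
      = row r' (row_mx (Dmat d (Xi i)) (Dmat d (Yi i))))
  (E : nat -> 'I_Mag -> 'I_Mag -> bool)
  (C : nat -> 'I_Mag -> vmx R Nd)
  (hC : pssd_execution (fun i => Dmat d (Xi i)) (fun i => Dmat d (Yi i)) E C) :
  exists k : nat, forall p : nat, (k < p)%N -> forall i : 'I_Mag, C p i = C k i.
Proof.
case: hC => _ hstep.
have key : forall k i, (ncols (C k.+1 i) <= ncols (C k i))%N /\
    (ncols (C k.+1 i) = ncols (C k i) -> C k.+1 i = C k i).
  move=> k i; have [Dk [Ek_ [_ _ hif]]] := hstep k i.
  move: hif; case: ifP => hlt -> //.
  split; first exact: (ltnW hlt).
  move=> heq; have heq' : ncols Ek_ = ncols (C k i) := heq.
  by exfalso; move: hlt; rewrite heq' ltnn.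
pose f k := (\sum_(i < Mag) ncols (C k i))%N.
have monf : forall k, (f k.+1 <= f k)%N.
  by move=> k; apply: leq_sum => i _; case: (key k i).
have [k hk] := @nonincr_stab (f 0%N) f monf (leqnn _).
exists k => p hp i.
have allk : forall q, (k <= q)%N -> forall j, C q j = C k j.
  elim=> [|q IHq] hq j.
    by have -> : k = 0%N by lia.
  case: (leqP k q) => hkq; last first.
    by have -> : k = q.+1 by lia.
  rewrite -(IHq hkq j).
  apply: (proj2 (key q j)).
  have [h1 _] := key q j.
  apply/eqP; rewrite eqn_leq h1 /=; rewrite leqNgt; apply/negP => hlt.
  have e1 := hk q.+1 ltac:(lia); have e2 := hk q hkq.
  have : (f q.+1 < f q)%N.
    rewrite /f (bigD1 j) //= [X in (_ < X)%N](bigD1 j) //=.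
    have : (\sum_(i0 < Mag | i0 != j) ncols (C q.+1 i0) <=
            \sum_(i0 < Mag | i0 != j) ncols (C q i0))%N.
      by apply: leq_sum => i0 _; case: (key q i0).
    by move=> hh; rewrite -addSn; exact: leq_add hlt hh.
  by rewrite e1 e2 ltnn.
by apply: allk; lia.
Qed.
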